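(* Let $K$ be an algebraically closed field of characteristic zero, $\mathcal{K} = K(t)$, $d \ge 2$, $f_d(z) = z^d+t$, and $\alpha \in \mathcal{K}$. Then $\widehat{h}_{f_d}(\alpha) = h(\alpha)$ if $v_\infty(\alpha) < 0$, and $\widehat{h}_{f_d}(\alpha) = h(\alpha) + 1/d$ if $v_\infty(\alpha) \ge 0$. Thus, for all $n \ge 1$, $h(f_d^n(\alpha)) = d^n \widehat{h}_{f_d}(\alpha)$.
   Context: Valuations: $v_\infty(g) = \deg(\text{denominator}) - \deg(\text{numerator})$ for $g \in K(t)$. The height $h(\alpha)$ of $\alpha \in \mathcal{K}$ is its degree as a rational function in $t$, i.e. $-\sum_\mathfrak{p}\min\{v_\mathfrak{p}(\alpha),0\}$ over places of $\mathcal{K}$ trivial on $K$. The canonical height is $\widehat{h}_{f_d}(\alpha) := \lim_{n\to\infty} d^{-n} h(f_d^n(\alpha))$. *)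

(* Defs.v *)
From mathcomp Require Import all_boot all_order all_algebra fraction.
From mathcomp Require Import all_classical all_reals all_analysis.
Set Implicit Arguments. Unset Strict Implicit. Unset Printing Implicit Defensive.
Import Order.TTheory GRing.Theory Num.Theory.
Import numFieldNormedType.Exports.
Local Open Scope classical_set_scope.
Local Open Scope ring_scope.

(* The function field  K(t) = {fraction {poly K}}, t = 'X%:F. *)
Notation funfield K := {fraction {poly K}}.

(* numerator and denominator of the canonical (not necessarily reduced)
   representative of alpha; the denominator is nonzero *)
Definition fnum (K : fieldType) (a : funfield K) : {poly K} := (val (repr a)).1.
Definition fden (K : fieldType) (a : funfield K) : {poly K} := (val (repr a)).2.

Definition pdeg (K : fieldType) (p : {poly K}) : nat := (size p).-1.

Definition height (K : fieldType) (a : funfield K) : nat :=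
  let g := gcdp (fnum a) (fden a) in
  maxn (pdeg (fnum a %/ g)) (pdeg (fden a %/ g)).

(* v_infty(alpha) = deg(denominator) - deg(numerator); None encodes +oo (alpha = 0) *)
Definition vinf (K : fieldType) (a : funfield K) : option int :=
  if a == 0 then None
  else Some ((pdeg (fden a))%:Z - (pdeg (fnum a))%:Z).

Definition vinf_neg (K : fieldType) (a : funfield K) : bool :=
  if vinf a is Some v then v < 0 else false.

Definition fd (K : fieldType) (d : nat) (z : funfield K) : funfield K :=
  z ^+ d + tofrac 'X.

Definition hseq (R : realType) (K : fieldType) (d : nat) (a : funfield K) : R^nat :=
  fun n => (height (iter n (fd d) a))%:R / (d%:R ^+ n).

Definition canheight (R : realType) (K : fieldType) (d : nat) (a : funfield K) : R :=
  limn (hseq R d a).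

(* Main.v *)
Require Import Defs.
From mathcomp Require Import all_boot all_order all_algebra fraction.
From mathcomp Require Import all_classical all_reals all_analysis.
From mathcomp Require Import generic_quotient zify ring.
Import Order.TTheory GRing.Theory Num.Theory.
Import numFieldNormedType.Exports.
Local Open Scope classical_set_scope.
Local Open Scope ring_scope.
Set Implicit Arguments. Unset Strict Implicit.

Section Alg.
Variable KK : fieldType.

Lemma fracE (x : {ratio {poly KK}}) : \pi_({fraction {poly KK}})%qT x = (tofrac x.1 / tofrac x.2).
Proof.
unlock tofrac.
have -> : (\pi_{fraction {poly KK}} (Ratio x.1 1) / \pi_{fraction {poly KK}} (Ratio x.2 1))%qT =
  FracField.mul (\pi_{fraction {poly KK}} (Ratio x.1 1))%qT (FracField.inv (\pi_{fraction {poly KK}} (Ratio x.2 1)))%qT by [].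
rewrite -FracField.pi_inv -FracField.pi_mul.
congr (\pi_ _ _)%qT.
rewrite /FracField.mulf /FracField.invf.
rewrite !numden_Ratio ?oner_neq0 //= ?(denom_ratioP x) ?mulr1 ?mul1r //.
by rewrite Ratio_numden.
Qed.

Lemma fnumdenE (a : funfield KK) : a = tofrac (fnum a) / tofrac (fden a).
Proof. by rewrite /fnum /fden -fracE reprK. Qed.

Lemma fden_neq0 (a : funfield KK) : fden a != 0.
Proof. exact: denom_ratioP. Qed.

Lemma tofrac_neq0 (p : {poly KK}) : p != 0 -> tofrac p != 0.
Proof. by rewrite tofrac_eq0. Qed.

Lemma frac_cross (p q p' q' : {poly KK}) : q != 0 -> q' != 0 ->
  tofrac p / tofrac q = tofrac p' / tofrac q' -> p * q' = p' * q.
Proof.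
move=> q0 q'0 /eqP; rewrite eqr_div ?tofrac_neq0 // -!tofracM.
by rewrite tofrac_eq => /eqP.
Qed.

Lemma coprime_unique (p q p' q' : {poly KK}) : 
  coprimep p q -> coprimep p' q' -> p * q' = p' * q ->
  size p = size p' /\ size q = size q'.
Proof.
move=> cpq cpq' E; split; apply: eqp_size; apply/andP; split.
- by rewrite -(Gauss_dvdpl _ cpq) -E dvdp_mulr.
- by rewrite -(Gauss_dvdpl _ cpq') E dvdp_mulr.
- rewrite coprimep_sym in cpq.
  by rewrite -(Gauss_dvdpl _ cpq) mulrC E dvdp_mull.
- rewrite coprimep_sym in cpq'.
  by rewrite -(Gauss_dvdpl _ cpq') mulrC -E dvdp_mull.
Qed.

Lemma height_rep (a : funfield KK) p q : q != 0 -> coprimep p q ->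
  a = tofrac p / tofrac q -> height a = maxn (pdeg p) (pdeg q).
Proof.
move=> q0 cpq Ea.
rewrite /height.
set n := fnum a; set m := fden a; set g := gcdp n m.
have m0 : m != 0 by exact: fden_neq0.
have g0 : g != 0 by rewrite gcdp_eq0 negb_and m0 orbT.
have En : n = n %/ g * g by rewrite divpK // dvdp_gcdl.
have Em : m = m %/ g * g by rewrite divpK // dvdp_gcdr.
have mg0 : m %/ g != 0 by apply: contra m0 => /eqP mg; rewrite Em mg mul0r.
have cg : coprimep (n %/ g) (m %/ g) by apply: coprimep_div_gcd; rewrite m0 orbT.
have E1 : n * q = p * m by apply: frac_cross => //; rewrite -Ea; exact: (esym (fnumdenE a)).
have E2 : n %/ g * q = p * (m %/ g).
  apply: (mulIf g0); rewrite -mulrA (mulrC q g) mulrA -En E1 -mulrA -Em //.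
have [e1 e2] := coprime_unique cg cpq E2.
by rewrite /pdeg -/g e1 e2.
Qed.

Lemma vinf_neg_rep (a : funfield KK) p q : q != 0 ->
  a = tofrac p / tofrac q -> vinf_neg a = (pdeg q < pdeg p)%N.
Proof.
move=> q0 Ea; rewrite /vinf_neg /vinf.
have m0 : fden a != 0 by exact: fden_neq0.
case: ifP => [/eqP a0|/negbT a0].
  have : p = 0.
    apply/eqP; rewrite -tofrac_eq0.
    move: a0; rewrite Ea => /eqP; rewrite mulf_eq0 invr_eq0 (negbTE (tofrac_neq0 q0)) orbF.
    by [].
  by move=> ->; rewrite /pdeg size_poly0.
have p0 : p != 0 by apply: contra a0; rewrite Ea => /eqP ->; rewrite tofrac0 mul0r.
have n0 : fnum a != 0.
  by apply: contra a0; rewrite {2}(fnumdenE a) => /eqP ->; rewrite tofrac0 mul0r.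
have E1 : fnum a * q = p * fden a by apply: frac_cross => //; rewrite -Ea; exact: (esym (fnumdenE a)).
have := congr1 (fun r : {poly KK} => size r) E1.
rewrite !size_mul //.
have : (0 < size q)%N by rewrite size_poly_gt0.
have : (0 < size p)%N by rewrite size_poly_gt0.
have : (0 < size (fnum a))%N by rewrite size_poly_gt0.
have : (0 < size (fden a))%N by rewrite size_poly_gt0.
rewrite /pdeg => h1 h2 h3 h4 h5.
rewrite subr_lt0 ltz_nat.
move: h1 h2 h3 h4 h5; case: (size (fden a)) => // x; case: (size (fnum a)) => // y; case: (size p) => // z; case: (size q) => // w _ _ _ _ /=.
move=> h; apply/idP/idP => H; lia.
Qed.

Lemma fd_rep (d : nat) (p q : {poly KK}) : q != 0 ->
  fd d (tofrac p / tofrac q) = tofrac (p ^+ d + 'X * q ^+ d) / tofrac (q ^+ d).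
Proof.
move=> q0; rewrite /fd tofracD tofracM !tofracXn expr_div_n.
have hq : tofrac q ^+ d != 0 by rewrite expf_neq0 // tofrac_neq0.
by rewrite mulrDl mulfK.
Qed.

Lemma coprime_step (d : nat) (p q : {poly KK}) : coprimep p q -> coprimep (p ^+ d + 'X * q ^+ d) (q ^+ d).
Proof.
move=> c; rewrite coprimep_sym addrC coprimep_addl_mul.
by apply: coprimep_expl; apply: coprimep_expr; rewrite coprimep_sym.
Qed.

Lemma size_step (d : nat) (p q : {poly KK}) : q != 0 -> (1 < d)%N ->
  [/\ pdeg (q ^+ d) = (pdeg q * d)%N,
      size ('X * q ^+ d) = (pdeg q * d).+2,
      (p != 0 -> size (p ^+ d) = (pdeg p * d).+1) &
      (size (p ^+ d) <= (pdeg p * d).+1)%N].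
Proof.
move=> q0 d1; rewrite /pdeg; split.
- by rewrite size_exp.
- have qd0 : q ^+ d != 0 by rewrite expf_neq0.
  rewrite mulrC size_mulX // -size_exp prednK // size_poly_gt0 //.
- move=> p0; rewrite -size_exp prednK // size_poly_gt0 expf_neq0 //.
- exact: size_poly_exp_leq.
Qed.

Lemma neg_iter (d : nat) (hd : (1 < d)%N) (n : nat) (p q : {poly KK}) : q != 0 -> coprimep p q ->
  (pdeg q < pdeg p)%N ->
  exists p' q', [/\ q' != 0, coprimep p' q', (pdeg q' < pdeg p')%N,
    pdeg p' = (d ^ n * pdeg p)%N &
    iter n (fd d) (tofrac p / tofrac q) = tofrac p' / tofrac q'].
Proof.
elim: n => [|n IH] q0 cpq lt.
  by exists p, q; split => //; rewrite expn0 mul1n.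
have [p' [q' [q'0 c' lt' E' Ei]]] := IH q0 cpq lt.
exists (p' ^+ d + 'X * q' ^+ d), (q' ^+ d).
have p'0 : p' != 0 by apply: contraTneq lt' => ->; rewrite /pdeg size_poly0.
have [e1 e2 e3 _] := size_step p' q'0 hd.
have e3' := e3 p'0.
have big : (size ('X * q' ^+ d)%R < size (p' ^+ d)%R)%N.
  by rewrite e2 e3'; apply/ssrnat.ltP; move/ssrnat.ltP: lt' => lt'; nia.
have es : pdeg (p' ^+ d + 'X * q' ^+ d) = (pdeg p' * d)%N by rewrite /pdeg size_polyDl // e3'.
split.
- by rewrite expf_neq0.
- exact: coprime_step.
- by rewrite es e1; apply/ssrnat.ltP; move/ssrnat.ltP: lt' => lt'; nia.
- by rewrite es E' expnS mulnC mulnA.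
- by rewrite iterS Ei fd_rep.
Qed.

Lemma nonneg_step (d : nat) (hd : (1 < d)%N) (p q : {poly KK}) : q != 0 -> coprimep p q ->
  (pdeg p <= pdeg q)%N ->
  exists p' q', [/\ q' != 0, coprimep p' q', (pdeg q' < pdeg p')%N,
    pdeg p' = (d * pdeg q).+1 &
    fd d (tofrac p / tofrac q) = tofrac p' / tofrac q'].
Proof.
move=> q0 cpq le.
exists (p ^+ d + 'X * q ^+ d), (q ^+ d).
have [e1 e2 _ e4] := size_step p q0 hd.
have big : (size (p ^+ d)%R < size ('X * q ^+ d)%R)%N.
  by rewrite e2; apply: (leq_ltn_trans e4); apply/ssrnat.ltP; move/ssrnat.leP: le => le; nia.
have es : pdeg (p ^+ d + 'X * q ^+ d) = (pdeg q * d).+1 by rewrite /pdeg addrC size_polyDl // e2.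
split.
- by rewrite expf_neq0.
- exact: coprime_step.
- by rewrite es e1.
- by rewrite es mulnC.
- by rewrite fd_rep.
Qed.


Lemma rep_exists (a : funfield KK) : exists p q : {poly KK},
  [/\ q != 0, coprimep p q & a = tofrac p / tofrac q].
Proof.
set n := fnum a; set m := fden a; set g := gcdp n m.
have m0 : m != 0 by exact: fden_neq0.
have g0 : g != 0 by rewrite gcdp_eq0 negb_and m0 orbT.
have En : n = n %/ g * g by rewrite divpK // dvdp_gcdl.
have Em : m = m %/ g * g by rewrite divpK // dvdp_gcdr.
have mg0 : m %/ g != 0 by apply: contra m0 => /eqP mg; rewrite Em mg mul0r.
have cg : coprimep (n %/ g) (m %/ g) by apply: coprimep_div_gcd; rewrite m0 orbT.
exists (n %/ g), (m %/ g); split => //.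
rewrite {1}(fnumdenE a) -/n -/m {1}En {1}Em !tofracM invfM mulrACA divff ?mulr1 //.
by rewrite tofrac_neq0.
Qed.
End Alg.

Lemma limit_helper (R : realType) (u : R^nat) (c : R) :
  (forall n, (1 <= n)%N -> u n = c) -> cvgn u /\ limn u = c.
Proof.
move=> H.
have cv : u @ \oo --> c.
  apply: cvg_near_cst; exists 1%N => // n /= hn; exact: H.
split; first by apply/cvg_ex; exists c.
exact: cvg_lim.
Qed.

Lemma main_helper (R : realType) (K : fieldType) (d : nat) (hd : (1 < d)%N)
  (a : funfield K) (c : R) :
  (forall n, (1 <= n)%N -> (height (iter n (fd d) a))%:R = d%:R ^+ n * c) ->
  cvgn (hseq R d a) /\ canheight R d a = c.
Proof.
move=> H; apply: limit_helper => n hn.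
rewrite /hseq H // mulrC mulKf // expf_neq0 // pnatr_eq0 -lt0n.
by apply: leq_trans hd.
Qed.

Theorem corollary2p2 (R : realType) (K : closedFieldType)
    (charK0 : [pchar K] =i pred0) (d : nat) (hd : (2 <= d)%N)
    (a : funfield K) :
  cvgn (hseq R d a) /\
  (vinf_neg a -> canheight R d a = (height a)%:R) /\
  (~~ vinf_neg a -> canheight R d a = (height a)%:R + d%:R^-1) /\
  (forall n : nat, (1 <= n)%N ->
     (height (iter n (fd d) a))%:R = d%:R ^+ n * canheight R d a).
Proof.
have [p [q [q0 cpq Ea]]] := rep_exists a.
have hv := vinf_neg_rep q0 Ea.
have hh := height_rep q0 cpq Ea.
have d0 : (d%:R : R) != 0 by rewrite pnatr_eq0 -lt0n; apply: leq_trans hd.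
case: (ltnP (pdeg q) (pdeg p)) => lt.
- have Hn : forall n, (1 <= n)%N ->
      (height (iter n (fd d) a))%:R = d%:R ^+ n * ((height a)%:R : R).
    move=> n _.
    have [p' [q' [q'0 c' lt' E' Ei]]] := neg_iter hd n q0 cpq lt.
    rewrite hh Ea Ei (height_rep q'0 c' (erefl _)).
    rewrite (maxn_idPl (ltnW lt')) (maxn_idPl (ltnW lt)) E' natrM natrX //.
  have [cv ch] := main_helper hd Hn.
  split => //; split; first by rewrite ch.
  split; first by rewrite hv lt.
  by move=> n hn; rewrite ch Hn.
- have [p1 [q1 [q10 c1 lt1 E1 Ei1]]] := nonneg_step hd q0 cpq lt.
  have Hn : forall n, (1 <= n)%N ->
      (height (iter n (fd d) a))%:R = d%:R ^+ n * ((height a)%:R + d%:R^-1 : R).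
    case=> // n _.
    have [p' [q' [q'0 c' lt' E' Ei]]] := neg_iter hd n q10 c1 lt1.
    rewrite hh iterSr Ea Ei1 Ei (height_rep q'0 c' (erefl _)).
    rewrite (maxn_idPl (ltnW lt')) (maxn_idPr lt) E' E1 natrM natrX.
    rewrite exprSr -mulrA; congr (_ * _).
    by rewrite mulrDr mulfV // -addn1 natrD natrM.
  have [cv ch] := main_helper hd Hn.
  split => //; split; first by rewrite hv ltnNge lt.
  split; first by rewrite ch.
  by move=> n hn; rewrite ch Hn.
Qed.
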